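(* Let $a\in\mathbb{C}$ with $|a-\tfrac14|<\tfrac14$, and let $\varphi(z)=az^2+(1-2a)z+a$. Then the iterates $\varphi_n$ converge to the constant $1$ uniformly on all of $\mathbb{D}$, i.e. $\lim_{n\to\infty}\sup_{z\in\mathbb{D}}|\varphi_n(z)-1|=0$.
   Context: $\mathbb{D}$ is the open unit disk. $\varphi_n$ denotes the $n$-th iterate $\varphi\circ\cdots\circ\varphi$ ($n$ times). Such $\varphi$ is an analytic self-map of $\mathbb{D}$ with $\varphi(1)=1$, $\varphi'(1)=1$. *)

(* Defs.v *)
From Stdlib Require Import Reals.
From Coquelicot Require Import Coquelicot.
Open Scope R_scope.

Definition phi (a : C) (z : C) : C :=
  (a * z * z + (1 - 2 * a) * z + a)%C.

Fixpoint iter_fun (f : C -> C) (n : nat) (z : C) : C :=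
  match n with
  | O => z
  | S m => f (iter_fun f m z)
  end.

(* Main.v *)
Require Import Defs.
From Stdlib Require Import Reals Lra Psatz.
From Coquelicot Require Import Coquelicot.
Open Scope R_scope.

Lemma re_eq (u v al be : R) : u > 1/2 -> al < 1/2 ->
  fst (((u,v)*(u,v)/((u,v)-(al,be)))%C) =
  u + ((u^2+v^2)*al - (al^2+be^2)*u)/((u-al)^2+(v-be)^2).
Proof.
intros Hu Ha.
assert (Hd : (u-al)^2+(v-be)^2 > 0).
{ assert (u - al > 0) by lra. assert ((u-al)^2>0) by (apply pow_lt; lra).
  assert (0 <= (v-be)^2) by (apply pow2_ge_0). lra. }
unfold Cdiv, Cmult, Cinv, Cminus, Cplus, Copp; simpl.
field. nra.
Qed.

Lemma re_bound (u v al be : R) : u > 1/2 -> al^2+be^2 < al/2 ->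
  ((u^2+v^2)*al - (al^2+be^2)*u)/((u-al)^2+(v-be)^2) >=
  (al - 2*(al^2+be^2))/(2+8*(al^2+be^2)).
Proof.
intros Hu Ha.
set (m := al^2+be^2) in *.
set (t := u^2+v^2).
assert (Hm : 0 <= m) by (unfold m; assert (0<=al^2) by apply pow2_ge_0; assert (0<=be^2) by apply pow2_ge_0; lra).
assert (Hal2 : al^2 <= m) by (unfold m; assert (0<=be^2) by apply pow2_ge_0; lra).
assert (Hal : al < 1/2) by nra.
assert (Ht : t > 1/4) by (unfold t; assert (0<=v^2) by apply pow2_ge_0; nra).
assert (Hd : (u-al)^2+(v-be)^2 > 0).
{ assert (u - al > 0) by lra. assert ((u-al)^2>0) by (apply pow_lt; lra).
  assert (0 <= (v-be)^2) by (apply pow2_ge_0). lra. }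
assert (HN : t*al - m*u >= (al - 2*m)*t).
{ assert (u <= 2*t) by (unfold t; nra). nra. }
assert (HD : (u-al)^2+(v-be)^2 <= (2+8*m)*t).
{ assert ((u-al)^2+(v-be)^2 <= 2*t + 2*m) by (unfold t, m; assert (0<=(u+al)^2) by apply pow2_ge_0; assert (0<=(v+be)^2) by apply pow2_ge_0; nra). nra. }
set (d := (u-al)^2+(v-be)^2) in *.
apply Rle_ge.
apply Rmult_le_reg_r with d; [lra|].
unfold Rdiv at 2. rewrite Rmult_assoc, Rinv_l by lra. rewrite Rmult_1_r.
apply Rle_trans with ((al - 2*m)*t); [|lra].
apply Rle_trans with ((al - 2 * m) / (2 + 8 * m) * ((2+8*m)*t)).
- apply Rmult_le_compat_l; [|lra].
  apply Rle_div_r; [lra|]. lra.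
- right. field. lra.
Qed.

Lemma half_lt (b s:R): 0<s -> s < 2*b -> 1/2 < b/s.
Proof. intros. apply Rmult_lt_reg_r with s; auto. replace (b/s*s) with b by (field; lra). lra. Qed.

Lemma phi_rec (a w : C) : (phi a (w + 1) - 1 = w + a*w*w)%C.
Proof. unfold phi. destruct a as [a1 a2], w as [w1 w2].
apply injective_projections; simpl; ring. Qed.

Theorem mainTheorem3 (a : C) :
  Cmod (a - RtoC (1/4))%C < 1/4 ->
  forall eps : R, 0 < eps ->
  exists N : nat, forall n : nat, (N <= n)%nat ->
    forall z : C, Cmod z < 1 -> Cmod (iter_fun (phi a) n z - 1)%C <= eps.
Proof.
intros Ha eps Heps.
destruct a as [al be].
assert (Hm : al^2+be^2 < al/2).
{ unfold Cmod in Ha. simpl in Ha.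
  match type of Ha with sqrt ?e < _ => set (s := e) in Ha end.
  assert (Hse : s = (al - 1/4)^2 + be^2) by (unfold s; ring).
  assert (0 <= s) by (rewrite Hse; assert (0<=(al-1/4)^2) by apply pow2_ge_0; assert (0<=be^2) by apply pow2_ge_0; lra).
  assert (Hs := sqrt_sqrt s H).
  assert (0 <= sqrt s) by apply sqrt_pos.
  assert (s < 1/16) by nra. rewrite Hse in *. nra. }
set (m := al^2+be^2) in *.
assert (Hm0 : 0 <= m) by (unfold m; assert (0<=al^2) by apply pow2_ge_0; assert (0<=be^2) by apply pow2_ge_0; lra).
assert (Hal2 : al^2 <= m) by (unfold m; assert (0<=be^2) by apply pow2_ge_0; lra).
assert (Hal : al < 1/2) by nra.
set (dl := (al - 2*m)/(2+8*m)).
assert (Hdl : dl > 0) by (unfold dl; apply Rdiv_lt_0_compat; lra).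
destruct (archimed_cor1 (eps*dl)) as [N [HN HN0]]; [nra|].
exists N. intros n Hn z Hz.
assert (Inv : forall k, exists x : C, fst x > 1/2 /\ fst x >= 1/2 + INR k * dl
   /\ (iter_fun (phi (al,be)) k z - 1 = - / x)%C).
{ induction k as [|k IH].
  - destruct z as [z1 z2].
    assert (Hz' : z1^2 + z2^2 < 1).
    { unfold Cmod in Hz; cbn [fst snd] in Hz.
      assert (0 <= z1^2+z2^2) by (assert (0<=z1^2) by apply pow2_ge_0; assert (0<=z2^2) by apply pow2_ge_0; lra).
      assert (Hs := sqrt_sqrt _ H).
      assert (0 <= sqrt (z1^2+z2^2)) by apply sqrt_pos. nra. }
    set (s := (z1-1)^2 + z2^2).
    assert (Hs : s > 0).
    { assert (0<=z2^2) by apply pow2_ge_0.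
      assert (z1 - 1 < 0) by nra. unfold s.
      assert ((z1-1)^2 > 0) by (replace ((z1-1)^2) with ((1-z1)^2) by ring; apply pow_lt; lra).
      lra. }
    exists (-(z1-1)/s, z2/s). simpl. split; [|split].
    + apply Rlt_gt. apply half_lt; [lra|]. unfold s. lra.
    + rewrite Rmult_0_l, Rplus_0_r. apply Rle_ge, Rlt_le.
      apply half_lt; [lra|]. unfold s. lra.
    + unfold Cinv, Cminus, Cplus, Copp; simpl.
      unfold s in *. apply injective_projections; simpl.
      * field. apply Rgt_not_eq. replace ((z1 - 1) * (z1 - 1) + z2 * z2) with ((z1-1)^2+z2^2) by ring. lra.
      * field. apply Rgt_not_eq. replace ((z1 - 1) * (z1 - 1) + z2 * z2) with ((z1-1)^2+z2^2) by ring. lra.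
  - destruct IH as [x [Hx1 [Hx2 Hx3]]].
    exists (x*x/(x - (al,be)))%C.
    destruct x as [u v]. simpl in Hx1, Hx2.
    rewrite re_eq by lra. fold m.
    assert (Hb := re_bound u v al be Hx1 Hm). fold m in Hb. fold dl in Hb.
    split; [|split].
    + lra.
    + rewrite S_INR. lra.
    + simpl. replace (iter_fun (phi (al, be)) k z) with
        ((iter_fun (phi (al, be)) k z - 1) + 1)%C by ring.
      rewrite phi_rec, Hx3.
      assert (Hx0 : (u,v) <> RtoC 0).
      { intro H. injection H. lra. }
      assert (Hxa : ((u,v) - (al,be))%C <> RtoC 0).
      { intro H. injection H. intros. lra. }
      field. split; auto. }
destruct (Inv n) as [x [Hx1 [Hx2 Hx3]]].
rewrite Hx3, Cmod_opp.
assert (Hx0 : x <> RtoC 0).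
{ intro H. rewrite H in Hx1. simpl in Hx1. lra. }
rewrite Cmod_inv by auto.
assert (Hc : fst x <= Cmod x).
{ apply Rle_trans with (Rabs (fst x)); [apply Rle_abs|].
  apply Rle_trans with (Rmax (Rabs (fst x)) (Rabs (snd x))); [apply Rmax_l|].
  apply Rmax_Cmod. }
assert (HnN : INR N <= INR n) by (apply le_INR; auto).
assert (HN1 : 0 < INR N) by (apply lt_0_INR; auto).
assert (Hf : fst x >= INR N * dl) by nra.
apply Rle_trans with (/ (INR N * dl)).
- apply Rinv_le_contravar; nra.
- rewrite Rinv_mult. apply Rlt_le.
  apply Rmult_lt_reg_r with dl; [lra|].
  rewrite Rmult_assoc, Rinv_l by lra. lra.
Qed.
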